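(* Let $X\subset Y$ be spaces with $X\in\mathcal F_{\omega_1}(Y)$, let $\alpha\le\omega_1$, and suppose $X\subset H$ for some $H\in\mathcal F_{<\alpha}(Y)$. (i) If $X$ is dense in $Y$ and locally $\mathcal F_\alpha$-hard in $Y$, then $H\setminus X$ is dense in $Y$. (ii) More generally, if $X$ is $\mathcal F_\alpha$-hard in $Y$ at some $y\in Y$, then $y\in\overline{H\setminus X}^Y$.
   Context: All spaces are Tychonoff. $\mathcal F$-Borel hierarchy: $\mathcal F_0(Y)$ closed sets; for $0<\alpha<\omega_1$, $\mathcal F_\alpha(Y)$ = countable unions (odd $\alpha$) or countable intersections (even $\alpha$) of members of $\mathcal F_{<\alpha}(Y)=\bigcup_{\beta<\alpha}\mathcal F_\beta(Y)$ (parity of $\lambda+m$, $\lambda$ limit or 0, is that of $m$); $\mathcal F_{\omega_1}(Y)$ = Suslin-$\mathcal F$ subsets of $Y$; $\mathcal F_{<\omega_1}(Y)=\bigcup_{\beta<\omega_1}\mathcal F_\beta(Y)$. $\mathrm{Compl}(A,Y)$ = least $\alpha\le\omega_1$ with $A\in\mathcal F_\alpha(Y)$. For $y\in Y$: $\mathrm{Compl}_y(X,Y)=\min\{\mathrm{Compl}(\overline U^Y\cap X,Y): U$ neighborhood of $y$ in $Y\}$. $X$ is $\mathcal F_\alpha$-hard in $Y$ at $y$ if $\mathrm{Compl}_y(X,Y)\ge\alpha$, and locally $\mathcal F_\alpha$-hard in $Y$ if it is $\mathcal F_\alpha$-hard in $Y$ at every $x\in X$. *)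

(* Defs.v *)
From Stdlib Require Import Reals List.
Open Scope R_scope.

Record TopSpace := {
  carrier :> Type;
  is_open : (carrier -> Prop) -> Prop;
  open_ext : forall U V : carrier -> Prop,
      (forall x, U x <-> V x) -> is_open U -> is_open V;
  open_full : is_open (fun _ => True);
  open_inter : forall U V, is_open U -> is_open V ->
      is_open (fun x => U x /\ V x);
  open_union : forall (I : Type) (F : I -> carrier -> Prop),
      (forall i, is_open (F i)) -> is_open (fun x => exists i, F i x)
}.

Section Top.
Variable Y : TopSpace.

Definition is_closed (A : Y -> Prop) : Prop := is_open Y (fun x => ~ A x).

Definition closure (A : Y -> Prop) (y : Y) : Prop :=
  forall U, is_open Y U -> U y -> exists z, U z /\ A z.

Definition dense (A : Y -> Prop) : Prop := forall y, closure A y.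

Definition nbhd (N : Y -> Prop) (y : Y) : Prop :=
  exists U, is_open Y U /\ U y /\ forall z, U z -> N z.

Definition continuous_R (f : Y -> R) : Prop :=
  forall x eps, 0 < eps -> exists U, is_open Y U /\ U x /\
    forall z, U z -> Rabs (f z - f x) < eps.

Definition tychonoff : Prop :=
  (forall x : Y, is_closed (fun z => z = x)) /\
  (forall (F : Y -> Prop) (y : Y), is_closed F -> ~ F y ->
     exists f : Y -> R, continuous_R f /\ f y = 0 /\
       forall z, F z -> f z = 1).
End Top.

Inductive Ord : Type :=
| OZ : Ord
| OS : Ord -> Ord
| OL : (nat -> Ord) -> Ord.

Inductive ole : Ord -> Ord -> Prop :=
| ole_Z : forall b, ole OZ b
| ole_refl : forall a, ole a a
| ole_trans : forall a b c, ole a b -> ole b c -> ole a c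
| ole_S_mono : forall a b, ole a b -> ole (OS a) (OS b)
| ole_S_right : forall a, ole a (OS a)
| ole_cocone : forall a f n, ole a (f n) -> ole a (OL f)
| ole_limiting : forall f b, (forall n, ole (f n) b) -> ole (OL f) b.

Definition olt (a b : Ord) : Prop := ole (OS a) b.
Definition oeq (a b : Ord) : Prop := ole a b /\ ole b a.

Definition limit_or_zero (a : Ord) : Prop :=
  forall b, olt b a -> olt (OS b) a.

(** parity: lambda + m has the parity of m *)
Inductive ord_even : Ord -> Prop :=
| even_lim : forall a, limit_or_zero a -> ord_even a
| even_S : forall a b, ord_odd b -> oeq a (OS b) -> ord_even a
with ord_odd : Ord -> Prop :=
| odd_S : forall a b, ord_even b -> oeq a (OS b) -> ord_odd a.

Section Hier.
Variable Y : TopSpace.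

Inductive InF : Ord -> (Y -> Prop) -> Prop :=
| InF_zero : forall a A, ole a OZ -> is_closed Y A -> InF a A
| InF_odd : forall a A (b : nat -> Ord) (B : nat -> Y -> Prop),
    olt OZ a -> ord_odd a ->
    (forall n, olt (b n) a) -> (forall n, InF (b n) (B n)) ->
    (forall y, A y <-> exists n, B n y) -> InF a A
| InF_even : forall a A (b : nat -> Ord) (B : nat -> Y -> Prop),
    olt OZ a -> ord_even a ->
    (forall n, olt (b n) a) -> (forall n, InF (b n) (B n)) ->
    (forall y, A y <-> forall n, B n y) -> InF a A.

Definition prefix (s : nat -> nat) (n : nat) : list nat := map s (seq 0 n).

Definition suslinF (A : Y -> Prop) : Prop :=
  exists C : list nat -> Y -> Prop, (forall s, is_closed Y (C s)) /\
    forall y, A y <-> exists s : nat -> nat, forall n, C (prefix s (S n)) y.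

(** Ordinals <= omega_1: [Some a] is the countable ordinal a, [None] is omega_1 *)
Definition OrdX := option Ord.

Definition oltX (b a : OrdX) : Prop :=
  match b, a with
  | Some b', Some a' => olt b' a'
  | Some _, None => True
  | None, _ => False
  end.

Definition InFX (a : OrdX) (A : Y -> Prop) : Prop :=
  match a with
  | Some a' => InF a' A
  | None => suslinF A
  end.

Definition InFlt (a : OrdX) (A : Y -> Prop) : Prop :=
  exists b, oltX b a /\ InFX b A.

Definition compl_ge (A : Y -> Prop) (a : OrdX) : Prop :=
  forall b, oltX b a -> ~ InFX b A.

Definition hard_at (X : Y -> Prop) (a : OrdX) (y : Y) : Prop :=
  forall U, nbhd Y U y -> compl_ge (fun z => closure Y U z /\ X z) a.

Definition locally_hard (X : Y -> Prop) (a : OrdX) : Prop :=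
  forall x, X x -> hard_at X a x.
End Hier.

(* Main.v *)
Require Import Defs.
From Stdlib Require Import Reals List Classical Lra.
Open Scope R_scope.

Lemma InF_ext (Y : TopSpace) a A A' : InF Y a A -> (forall y, A y <-> A' y) -> InF Y a A'.
Proof.
  intros HA E. destruct HA as [a A h hc|a A b B h1 h2 h3 h4 h5|a A b B h1 h2 h3 h4 h5].
  - apply InF_zero; auto. unfold is_closed in *. eapply open_ext; [|exact hc].
    intro x; specialize (E x); tauto.
  - eapply InF_odd; eauto. intro y; specialize (E y); specialize (h5 y); tauto.
  - eapply InF_even; eauto. intro y; specialize (E y); specialize (h5 y); tauto.
Qed.

Lemma closed_inter (Y : TopSpace) (C A : Y -> Prop) :
  is_closed Y C -> is_closed Y A -> is_closed Y (fun z => C z /\ A z).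
Proof.
  intros hC hA. unfold is_closed in *.
  pose (F := fun b : bool => if b then (fun x => ~ C x) else (fun x => ~ A x)).
  assert (Ho : is_open Y (fun x => exists b, F b x)).
  { apply open_union. intros []; simpl; auto. }
  eapply open_ext; [|exact Ho]. intro x; split.
  - intros [[|] h]; simpl in h; tauto.
  - intro h. destruct (classic (C x)).
    + exists false; simpl; tauto.
    + exists true; simpl; tauto.
Qed.

Lemma InF_inter (Y : TopSpace) a A : InF Y a A ->
  forall C, is_closed Y C -> InF Y a (fun z => C z /\ A z).
Proof.
  induction 1 as [a A h hc|a A b B h1 h2 h3 h4 IH h5|a A b B h1 h2 h3 h4 IH h5];
    intros C hC.
  - apply InF_zero; auto. apply closed_inter; auto.
  - eapply InF_odd with (B := fun n z => C z /\ B n z); eauto.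
    intro y; rewrite h5. firstorder.
  - eapply InF_even with (B := fun n z => C z /\ B n z); eauto.
    intro y; rewrite h5. split.
    + intros [c k] n; auto.
    + intro k. split; [apply (k 0%nat)|]. intro n; apply k.
Qed.

Lemma closure_closed (Y : TopSpace) (W : Y -> Prop) : is_closed Y (closure Y W).
Proof.
  unfold is_closed.
  pose (I := {U : Y -> Prop | is_open Y U /\ forall z, U z -> ~ W z}).
  assert (Ho : is_open Y (fun x => exists i : I, proj1_sig i x)).
  { apply open_union. intro i. exact (proj1 (proj2_sig i)). }
  eapply open_ext; [|exact Ho]. intro x; split.
  - intros [[U [hU hW]] hx] hc; simpl in hx.
    destruct (hc U hU hx) as [z [hz1 hz2]]. exact (hW z hz1 hz2).
  - intro hn. unfold closure in hn.
    apply not_all_ex_not in hn as [U hn].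
    apply imply_to_and in hn as [hU hn].
    apply imply_to_and in hn as [hUx hn].
    assert (hW : forall z, U z -> ~ W z) by (intros z h1 h2; apply hn; eauto).
    exists (exist _ U (conj hU hW)). exact hUx.
Qed.

Theorem lemma5p11 (Y : TopSpace) (HY : tychonoff Y) (X : Y -> Prop)
    (HX : suslinF Y X) (a : OrdX) (H : Y -> Prop)
    (HH : InFlt Y a H) (HXH : forall x, X x -> H x) :
  (dense Y X -> locally_hard Y X a -> dense Y (fun z => H z /\ ~ X z)) /\
  (forall y : Y, hard_at Y X a y -> closure Y (fun z => H z /\ ~ X z) y).
Proof.
  assert (P2 : forall y : Y, hard_at Y X a y -> closure Y (fun z => H z /\ ~ X z) y).
  { intros y hy. apply NNPP. intro hn. unfold closure in hn.
    apply not_all_ex_not in hn as [U hn].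
    apply imply_to_and in hn as [hU hn].
    apply imply_to_and in hn as [hUy hn].
    destruct HY as [_ HT].
    destruct (HT (fun x => ~ U x) y) as [f [fc [fy f1]]].
    { unfold is_closed. eapply open_ext; [|exact hU]. intro x; split; [tauto|apply NNPP]. }
    { tauto. }
    destruct (fc y (1/2)) as [W [hW [hWy hWf]]]; [lra|].
    assert (clW : forall z, closure Y W z -> U z).
    { intros z hz. apply NNPP; intro nU. pose proof (f1 z nU) as fz.
      destruct (fc z (1/2)) as [W' [hW' [hW'z hW'f]]]; [lra|].
      destruct (hz W' hW' hW'z) as [w [w1 w2]].
      specialize (hW'f w w1). specialize (hWf w w2). rewrite fy, fz in *.
      rewrite Rminus_0_r in hWf.
      pose proof (Rabs_triang_inv 1 (f w)). rewrite Rabs_R1 in H0.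
      rewrite <- Rabs_Ropp in hW'f. replace (- (f w - 1)) with (1 - f w) in hW'f by ring.
      lra. }
    destruct HH as [b [hb hbH]].
    assert (hN : nbhd Y W y) by (exists W; auto).
    apply (hy W hN b hb).
    destruct b as [b'|]; [|destruct a; simpl in hb; contradiction].
    simpl in *. eapply InF_ext.
    - apply (InF_inter Y b' H hbH (closure Y W)). apply closure_closed.
    - intro z; split.
      + intros [c h]; split; auto. apply NNPP; intro nx. apply hn.
        exists z; auto.
      + intros [c h]; auto. }
  split; auto.
  intros hd hl y U hU hUy. destruct (hd y U hU hUy) as [x [hx1 hx2]].
  exact (P2 x (hl x hx2) U hU hx1).
Qed.
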